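(* Let $P$ be a finite graded poset of rank $n$ with $\hat0$ and $\hat1$ admitting an $S_n$ EL-labeling $\lambda$, and let $U_1,\dots,U_{n-1}:\mathcal{M}(P)\to\mathcal{M}(P)$ be the maps defined below. Then $U_i^2=U_i$ for all $i$, $U_iU_j=U_jU_i$ whenever $|i-j|\ge2$, and $U_iU_{i+1}U_i=U_{i+1}U_iU_{i+1}$ for $i=1,\dots,n-2$. Consequently, extending the $U_i$ linearly to $\mathbb{C}\mathcal{M}(P)$ and letting $T_i$ act as $-U_i$ gives a representation of the 0-Hecke algebra $\mathcal{H}_n(0)$ on $\mathbb{C}\mathcal{M}(P)$. Moreover, if $U_i(\mathfrak m)\ne\mathfrak m$ then the label permutation of $U_i(\mathfrak m)$ is $\omega_{\mathfrak m}s_i$, which has one fewer inversion than $\omega_{\mathfrak m}$.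
   Context: Definitions: for a finite graded poset $P$ of rank $n$ with $\hat0,\hat1$, $\mathcal{M}(P)$ is its set of maximal chains and $\mathcal{E}(P)$ its set of covering pairs. An edge-labeling $\lambda:\mathcal{E}(P)\to\mathbb{Z}$ is an EL-labeling if every interval $[s,t]$ has exactly one maximal chain whose labels (read bottom to top) are weakly increasing, and its label sequence is strictly lexicographically smaller than that of every other maximal chain of $[s,t]$. It is an $S_n$ EL-labeling if moreover for every maximal chain $\mathfrak m:\hat0=x_0<\cdots<x_n=\hat1$ the sequence $\omega_{\mathfrak m}=(\lambda(x_0,x_1),\dots,\lambda(x_{n-1},x_n))$ is a permutation of $[n]$. The descent set of $\mathfrak m$ is the descent set of $\omega_{\mathfrak m}$. For $i\in[n-1]$, $U_i(\mathfrak m)$ is the unique maximal chain of $P$ that agrees with $\mathfrak m$ except possibly at its element of rank $i$ and has no descent at $i$. $s_i$ is the adjacent transposition $(i\ i+1)$; permutations compose right to left. The 0-Hecke algebra $\mathcal{H}_n(0)$ is the $\mathbb{C}$-algebra generated by $T_1,\dots,T_{n-1}$ subject to $T_i^2=-T_i$, $T_iT_j=T_jT_i$ for $|i-j|\ge2$, and $T_iT_{i+1}T_i=T_{i+1}T_iT_{i+1}$. *)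

(* Defs.v *)
From HB Require Import structures.
From mathcomp Require Import all_boot all_order all_algebra.
Set Implicit Arguments. Unset Strict Implicit. Unset Printing Implicit Defensive.
Import Order.Theory GRing.Theory.

Section Poset.
Context {d : Order.disp_t} {T : finTBPOrderType d}.
Local Open Scope order_scope.

Definition covers (x y : T) : bool :=
  (x < y) && [forall z : T, ~~ ((x < z) && (z < y))].

Definition sat_chain (s t : T) (c : seq T) : bool :=
  if c is x :: c' then [&& x == s, path covers x c' & last x c' == t] else false.

Definition graded_rank (n : nat) : Prop :=
  forall c, sat_chain \bot \top c -> size c = n.+1.

Definition labels (lam : T -> T -> int) (c : seq T) : seq int :=
  if c is x :: c' then pairmap lam x c' else [::].

Fixpoint lexlt (s t : seq int) : bool :=
  match s, t with
  | a :: s', b :: t' => ((a < b)%R || ((a == b) && lexlt s' t'))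
  | _, _ => false
  end.

Definition weakly_incr (w : seq int) : bool := sorted (fun a b => (a <= b)%R) w.

Definition EL_labeling (lam : T -> T -> int) : Prop :=
  forall s t : T, s <= t ->
    exists c, [/\ sat_chain s t c, weakly_incr (labels lam c) &
      forall c', sat_chain s t c' -> c' != c ->
        ~~ weakly_incr (labels lam c') && lexlt (labels lam c) (labels lam c')].

Definition Sn_EL_labeling (n : nat) (lam : T -> T -> int) : Prop :=
  EL_labeling lam /\
  forall c, sat_chain \bot \top c ->
    perm_eq (labels lam c) [seq (i%:Z)%R | i <- iota 1 n].

(* M(P), the maximal chains, as (n+1)-tuples x_0 < ... < x_n *)
Definition mchain (n : nat) : Type :=
  {t : n.+1.-tuple T | sat_chain \bot \top t}.

Definition omega (lam : T -> T -> int) (n : nat) (m : mchain n) : seq int :=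
  labels lam (val m).

End Poset.

(* descent of a word at position i (1-indexed, i in [n-1]) *)
Definition descent (w : seq int) (i : nat) : bool :=
  (nth 0%R w i < nth 0%R w i.-1)%R.

(* w s_i : the word w with its entries at positions i, i+1 (1-indexed) swapped *)
Definition word_mul_s (w : seq int) (i : nat) : seq int :=
  [seq nth 0%R w (if j == i.-1 then i else if j == i then i.-1 else j)
  | j <- iota 0 (size w)].

Definition inversions (w : seq int) : nat :=
  #|[set jk : 'I_(size w) * 'I_(size w) |
      (jk.1 < jk.2)%N && (nth 0%R w jk.2 < nth 0%R w jk.1)%R]|.

Section Umaps.
Context {d : Order.disp_t} {T : finTBPOrderType d}.
Variables (n : nat) (lam : T -> T -> int).

(* U_i(m): the maximal chain agreeing with m except possibly at rank i,
   with no descent at i (chosen by [pick]; it exists and is unique for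
   an S_n EL-labeling). *)
Definition Umap (i : nat) (m : mchain n) : mchain n :=
  odflt m [pick m' : mchain n |
    [forall j : 'I_n.+1, (val j != i) ==> (tnth (val m') j == tnth (val m) j)]
    && ~~ descent (omega lam m') i].

(* linear extension of U_i to the free vector space F M(P) = {ffun M(P) -> F}:
   the basis vector e_m is sent to e_{U_i m} *)
Definition Ulin (F : fieldType) (i : nat) (f : {ffun mchain n -> F}) :
    {ffun mchain n -> F} :=
  [ffun m' => (\sum_(m : mchain n | Umap i m == m') f m)%R].

Definition Tact (F : fieldType) (i : nat) (f : {ffun mchain n -> F}) :
    {ffun mchain n -> F} := (- Ulin i f)%R.

End Umaps.

(* Main.v *)
Require Import Defs.
From HB Require Import structures.
From mathcomp Require Import all_boot all_order all_algebra.
From mathcomp Require Import zify.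
Import Order.Theory GRing.Theory.
Set Implicit Arguments. Unset Strict Implicit. Unset Printing Implicit Defensive.

Section Gen.
Variables (d : Order.disp_t) (T : finTBPOrderType d).

Definition fchain (a b : T) (L : nat) (g : nat -> T) :=
  [/\ g 0 = a, g L = b & forall k, k < L -> covers (g k) (g k.+1)].

Lemma satP x0 (a b : T) s : sat_chain a b s <->
  [/\ 0 < size s, nth x0 s 0 = a, nth x0 s (size s).-1 = b &
      forall k, k.+1 < size s -> covers (nth x0 s k) (nth x0 s k.+1)].
Proof.
case: s => [|x c]; first by rewrite /sat_chain; split => [//|[]].
rewrite /sat_chain /=; split.
- case/and3P => /eqP -> /(pathP x0) Hp /eqP Hl; split => //.
  by rewrite -Hl (last_nth x0).
- case=> _ -> Hl Hk; apply/and3P; split => //.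
  + by apply/(pathP x0) => k Hk'; apply: Hk.
  + by rewrite (last_nth x0) Hl.
Qed.

Lemma fchain_sat a b L g : fchain a b L g -> sat_chain a b (mkseq g L.+1).
Proof.
case=> H0 HL Hc; apply/(satP a); rewrite size_mkseq; split => //; rewrite ?nth_mkseq //.
by move=> k Hk; rewrite !nth_mkseq //; [apply: Hc | apply: ltnW].
Qed.

Lemma sat_fchain x0 a b s : sat_chain a b s -> 0 < size s /\ fchain a b (size s).-1 (nth x0 s).
Proof.
case/(satP x0) => H1 H2 H3 H4; split => //; split => // k Hk; apply: H4; lia.
Qed.

Lemma fchain_le a b L g : fchain a b L g -> forall p q, p <= q <= L -> (g p <= g q)%O.
Proof.
case=> _ _ Hc p q /andP[]; elim: q => [|q IH] Hpq HqL.
  by have -> : p = 0 by lia.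
case: (ltnP p q.+1) => H.
  apply: le_trans (IH _ _) _; try lia.
  by have /andP[/ltW] := Hc q HqL.
by have -> : p = q.+1 by lia.
Qed.

End Gen.

Section Inv.

Definition sig (i j : nat) := if j == i.-1 then i else if j == i then i.-1 else j.

Lemma sig_cases i j : 0 < i ->
  (j = i.-1 /\ sig i j = i) \/ (j = i /\ sig i j = i.-1) \/ (j <> i.-1 /\ j <> i /\ sig i j = j).
Proof.
move=> Hi; rewrite /sig; case: eqP => A; first by left.
by case: eqP => B; [right; left | right; right].
Qed.

Lemma sigK i j : 0 < i -> sig i (sig i j) = j.
Proof. by move=> Hi; have := sig_cases j Hi; have := sig_cases (sig i j) Hi; lia. Qed.

Lemma inversionsE (w : seq int) : inversions w =
  \sum_(j < size w) \sum_(k < size w) ((j < k) && (nth 0%R w k < nth 0%R w j)%R : nat).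
Proof.
rewrite pair_big /= /inversions -sum1_card big_mkcond /=.
by apply: eq_bigr => -[j k] _; rewrite !inE /=; case: (_ && _).
Qed.

Lemma key_swap i (X : nat -> nat -> bool) : 0 < i -> X i.-1 i = true -> X i i.-1 = false ->
  forall j k, ((j < k) && X j k : nat) = ((sig i j < sig i k) && X j k) + ((j == i.-1) && (k == i)).
Proof.
move=> Hi H1 H2 j k.
have [[Ej Sj]|[[Ej Sj]|[Nj1 [Nj2 Sj]]]] := sig_cases j Hi;
have [[Ek Sk]|[[Ek Sk]|[Nk1 [Nk2 Sk]]]] := sig_cases k Hi;
rewrite Sj Sk; (try subst j); (try subst k); rewrite ?H1 ?H2;
  try (match goal with |- context [X ?a ?b] => case: (X a b) end); lia.
Qed.

Lemma ind_sum N a b (Ha : a < N) (Hb : b < N) :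
  \sum_(j < N) \sum_(k < N) ((val j == a) && (val k == b) : nat) = 1.
Proof.
rewrite (bigD1 (Ordinal Ha)) //= [X in _ + X]big1 => [|j Hj]; last first.
  by apply: big1 => k _; case: eqP => // E; case/eqP: Hj; apply: val_inj.
rewrite addn0 (bigD1 (Ordinal Hb)) //= !eqxx [X in _ + X]big1 ?addn0 // => k Hk.
by case: eqP => // E; case/eqP: Hk; apply: val_inj.
Qed.

Lemma inv_swap (w w' : seq int) i : size w' = size w -> 0 < i < size w ->
  (nth 0%R w i < nth 0%R w i.-1)%R ->
  (forall j, j < size w -> nth 0%R w' j = nth 0%R w (sig i j)) ->
  (inversions w').+1 = inversions w.
Proof.
move=> Hs Hi Hd Hw; rewrite !inversionsE Hs.
move: Hi Hw; set N := size w => Hi Hw.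
have Hi0 : 0 < i by lia.
have sig_lt : forall j : 'I_N, sig i j < N.
  by move=> j; have := sig_cases j Hi0; have := ltn_ord j; lia.
pose so (j : 'I_N) : 'I_N := Ordinal (sig_lt j).
have soK : cancel so so by move=> j; apply: val_inj; rewrite /= sigK.
have soinj := can_inj soK.
have E : forall j k : 'I_N, ((sig i j < sig i k) && (nth 0%R w' (sig i k) < nth 0%R w' (sig i j))%R : nat)
   = ((sig i j < sig i k) && (nth 0%R w k < nth 0%R w j)%R : nat).
  by move=> j k; rewrite !Hw ?sigK.
rewrite (reindex_inj soinj).
rewrite [X in X.+1 = _](eq_bigr (fun j : 'I_N => \sum_(k < N) ((sig i j < sig i k) && (nth 0%R w k < nth 0%R w j)%R : nat))); last first.
  by move=> j _; rewrite (reindex_inj soinj); apply: eq_bigr => k _ /=; rewrite E.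
have H1 : (nth 0%R w i < nth 0%R w i.-1)%R = true by [].
have H2 : (nth 0%R w i.-1 < nth 0%R w i)%R = false by rewrite lt_gtF.
rewrite [RHS](eq_bigr (fun j : 'I_N => \sum_(k < N) (((sig i j < sig i k) && (nth 0%R w k < nth 0%R w j)%R : nat)
   + ((val j == i.-1) && (val k == i) : nat)))); last first.
  move=> j _; apply: eq_bigr => k _.
  exact: (key_swap (X := fun j k => (nth 0%R w k < nth 0%R w j)%R)).
have BS : forall F G : 'I_N -> 'I_N -> nat,
    \sum_(j < N) \sum_(k < N) (F j k + G j k) =
    \sum_(j < N) \sum_(k < N) F j k + \sum_(j < N) \sum_(k < N) G j k.
  by move=> F G; rewrite -big_split; apply: eq_bigr => j _; rewrite big_split.
rewrite BS ind_sum ?addn1 //; lia.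
Qed.

End Inv.
Section Main.
Variables (d : Order.disp_t) (T : finTBPOrderType d) (n : nat) (lam : T -> T -> int).
Hypotheses (Hgraded : graded_rank (T := T) n) (HEL : Sn_EL_labeling n lam).

Definition cs (m : mchain n) : seq T := val (val m).
Definition cf (m : mchain n) (k : nat) : T := nth \bot%O (cs m) k.
Definition lab (m : mchain n) (k : nat) : int := lam (cf m k) (cf m k.+1).

Lemma size_cs m : size (cs m) = n.+1.
Proof. by rewrite /cs size_tuple. Qed.

Lemma cf_fchain m : fchain \bot%O \top%O n (cf m).
Proof.
have := sat_fchain \bot%O (valP m); rewrite -/(cs m) size_cs => -[_ H]; exact: H.
Qed.

Lemma chain_eq m1 m2 : (forall k, k <= n -> cf m1 k = cf m2 k) -> m1 = m2.
Proof.
move=> H; apply: val_inj; apply: val_inj => /=.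
apply: (eq_from_nth (x0 := \bot%O)); first by rewrite !size_tuple.
by move=> k; rewrite size_tuple ltnS => /H.
Qed.

Lemma mk_chain g : fchain \bot%O \top%O n g -> {m : mchain n | forall k, k <= n -> cf m k = g k}.
Proof.
move=> Hg.
have Hs : size (mkseq g n.+1) == n.+1 by rewrite size_mkseq.
exists (exist _ (Tuple Hs) (fchain_sat Hg)) => k Hk.
by rewrite /cf /cs /= nth_mkseq.
Qed.

Lemma size_omega (m : mchain n) : size (omega lam m) = n.
Proof.
change (size (labels lam (cs m)) = n).
have := size_cs m; case: (cs m) => [|x c] //= [<-].
by rewrite size_pairmap.
Qed.

Lemma omega_nth (m : mchain n) k : k < n -> nth 0%R (omega lam m) k = lab m k.
Proof.
move=> Hk; change (nth 0%R (labels lam (cs m)) k = lab m k); rewrite /lab /cf.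
have := size_cs m; case: (cs m) => [|x c] //= [Hc].
by rewrite (nth_pairmap \bot%O) ?Hc.
Qed.

Lemma wincrP x0 (s : seq T) : weakly_incr (labels lam s) <->
  (forall k, k.+2 < size s ->
     (lam (nth x0 s k) (nth x0 s k.+1) <= lam (nth x0 s k.+1) (nth x0 s k.+2))%R).
Proof.
case: s => [|x c] /=; first by split.
rewrite /weakly_incr; split.
- move/(sortedP 0%R) => H k Hk.
  have := H k; rewrite size_pairmap !(nth_pairmap x0); try lia.
  by apply; lia.
- move=> H; apply/(sortedP 0%R) => k; rewrite size_pairmap => Hk.
  rewrite !(nth_pairmap x0); try lia; exact: H.
Qed.


Definition win (m : mchain n) p q := mkseq (fun k => cf m (p + k)) (q - p).+1.

Lemma win_sat m p q : p < q <= n -> sat_chain (cf m p) (cf m q) (win m p q).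
Proof.
move=> Hpq; apply: fchain_sat; split => /=; first by rewrite addn0.
- by congr (cf m _); lia.
- move=> k Hk; have [_ _ H] := cf_fchain m; rewrite addnS; apply: H; lia.
Qed.

Lemma win_incr m p q : p < q <= n ->
  (forall k, p <= k -> k.+2 <= q -> (lab m k <= lab m k.+1)%R) ->
  weakly_incr (labels lam (win m p q)).
Proof.
move=> Hpq H; apply/(wincrP \bot%O) => k; rewrite size_mkseq => Hk.
rewrite !nth_mkseq; try lia.
have := H (p + k); rewrite /lab -!addnS; apply; lia.
Qed.

Lemma window_unique m1 m2 p q : p < q <= n ->
  cf m1 p = cf m2 p -> cf m1 q = cf m2 q ->
  (forall k, p <= k -> k.+2 <= q -> (lab m1 k <= lab m1 k.+1)%R) ->
  (forall k, p <= k -> k.+2 <= q -> (lab m2 k <= lab m2 k.+1)%R) ->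
  forall k, p <= k <= q -> cf m1 k = cf m2 k.
Proof.
move=> Hpq Hp Hq H1 H2 k Hk.
have Hle : (cf m1 p <= cf m1 q)%O by apply: (fchain_le (cf_fchain m1)); lia.
have [c [Hc Hci Hu]] := HEL.1 _ _ Hle.
have Hw : forall m, cf m p = cf m1 p -> cf m q = cf m1 q ->
   (forall k, p <= k -> k.+2 <= q -> (lab m k <= lab m k.+1)%R) -> win m p q = c.
  move=> m Ep Eq Hm; apply/eqP; apply/negPn/negP => Hne.
  have Hs : sat_chain (cf m1 p) (cf m1 q) (win m p q) by rewrite -Ep -Eq; apply: win_sat.
  by have := Hu _ Hs Hne; rewrite win_incr.
have E1 := Hw m1 erefl erefl H1.
have E2 := Hw m2 (esym Hp) (esym Hq) H2.
have := congr1 (fun s => nth \bot%O s (k - p)) (etrans E1 (esym E2)).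
rewrite /win !nth_mkseq; try lia.
by have -> : p + (k - p) = k by lia.
Qed.

Lemma window_exists m p q : p < q <= n -> exists m' : mchain n,
  (forall k, k <= n -> (k <= p) || (q <= k) -> cf m' k = cf m k) /\
  (forall k, p <= k -> k.+2 <= q -> (lab m' k <= lab m' k.+1)%R).
Proof.
move=> Hpq.
have Hle : (cf m p <= cf m q)%O by apply: (fchain_le (cf_fchain m)); lia.
have [c [Hc Hci _]] := HEL.1 _ _ Hle.
have [Hsz [H0 HL Hcov]] := sat_fchain \bot%O Hc.
have [F0 Fn Fc] := cf_fchain m.
set L := (size c).-1 in HL Hcov.
set h := nth \bot%O c.
pose g k := if k < p then cf m k else if k <= p + L then h (k - p) else cf m (k - L + q - p).
have gE1 : forall k, k < p -> g k = cf m k by move=> k Hk; rewrite /g Hk.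
have gE2 : forall k, p <= k <= p + L -> g k = h (k - p).
  by move=> k Hk; rewrite /g ifF ?ifT //; lia.
have gE3 : forall k, p + L < k -> g k = cf m (k - L + q - p).
  by move=> k Hk; rewrite /g ifF ?ifF //; lia.
have Hg : fchain \bot%O \top%O (p + L + (n - q)) g.
  split.
  - case: (ltnP 0 p) => A; first by rewrite gE1.
    rewrite gE2; last lia.
    have -> : 0 - p = 0 by lia.
    by rewrite /h H0; have -> : p = 0 by lia.
  - case: (ltnP (p + L) (p + L + (n - q))) => A.
      by rewrite gE3 //; rewrite -Fn; congr (cf m _); lia.
    rewrite gE2; last lia.
    have -> : p + L + (n - q) - p = L by lia.
    by rewrite /h -Fn HL; congr (cf m _); lia.
  - move=> k Hk.
    case: (ltnP k.+1 p) => A; first by rewrite !gE1; try lia; apply: Fc; lia.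
    case: (ltnP k p) => B.
      rewrite gE1 // gE2; last lia.
      have -> : k.+1 - p = 0 by lia.
      rewrite /h H0; have Ep : p = k.+1 by lia.
      by rewrite Ep; apply: Fc; lia.
    case: (ltnP k (p + L)) => C.
      rewrite !gE2; try lia.
      have -> : k.+1 - p = (k - p).+1 by lia.
      by apply: Hcov; lia.
    case: (ltnP (p + L) k) => D.
      rewrite !gE3; try lia.
      have -> : k.+1 - L + q - p = (k - L + q - p).+1 by lia.
      by apply: Fc; lia.
    rewrite gE2 ?gE3; try lia.
    have -> : k - p = L by lia.
    rewrite /h HL; have -> : k.+1 - L + q - p = q.+1 by lia.
    by apply: Fc; lia.
have := Hgraded (fchain_sat Hg); rewrite size_mkseq => -[EN].
have EL : L = q - p by lia.
rewrite EN in Hg.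
have [m' Hm'] := mk_chain Hg.
exists m'; split.
- move=> k Hk Hkpq; rewrite Hm' //.
  case: (ltnP k p) => A; first by rewrite gE1.
  case: (ltnP (p + L) k) => B; first by rewrite gE3 //; congr (cf m _); lia.
  rewrite gE2; last lia.
  case: (ltnP p k) => C.
    have -> : k - p = L by lia.
    by rewrite /h HL; congr (cf m _); lia.
  have -> : k - p = 0 by lia.
  by rewrite /h H0; congr (cf m _); lia.
- move=> k Hk Hkq; rewrite /lab !Hm'; try lia.
  rewrite !gE2; try lia.
  have := (wincrP \bot%O c).1 Hci (k - p).
  have -> : k.+1 - p = (k - p).+1 by lia.
  have -> : k.+2 - p = (k - p).+2 by lia.
  by apply; lia.
Qed.

Definition Pu i (b m' : mchain n) :=
  (forall k, k <= n -> k != i -> cf m' k = cf b k) /\ (lab m' i.-1 <= lab m' i)%R.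

Lemma Pu_pick i (b m' : mchain n) : 0 < i < n ->
  Pu i b m' <->
  [forall j : 'I_n.+1, (val j != i) ==> (tnth (val m') j == tnth (val b) j)]
    && ~~ descent (omega lam m') i.
Proof.
move=> Hi; rewrite /descent !omega_nth; try lia.
rewrite -leNgt.
split.
- case=> H1 H2; apply/andP; split; last by [].
  apply/forallP => j; apply/implyP => Hj.
  by rewrite !(tnth_nth \bot%O); apply/eqP; apply: H1 => //; rewrite -ltnS.
- case/andP => /forallP H1 H2; split; last by [].
  move=> k Hk Hki.
  have := H1 (Ordinal (n:=n.+1) (m:=k) Hk); rewrite /= Hki /= !(tnth_nth \bot%O) => /eqP.
  by [].
Qed.

Lemma Pu_uniq i b m1 m2 : 0 < i < n -> Pu i b m1 -> Pu i b m2 -> m1 = m2.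
Proof.
move=> Hi [A1 B1] [A2 B2]; apply: chain_eq => k Hk.
case: (eqVneq k i) => [->|Hki]; last by rewrite A1 // A2.
apply: (window_unique (p := i.-1) (q := i.+1)); try lia.
- by rewrite A1 ?A2 //; lia.
- by rewrite A1 ?A2 //; lia.
- move=> j Hj1 Hj2; have -> : j = i.-1 by lia.
  by rewrite prednK //; lia.
- move=> j Hj1 Hj2; have -> : j = i.-1 by lia.
  by rewrite prednK //; lia.
Qed.

Lemma Umap_spec i m : 0 < i < n -> Pu i m (Umap lam i m).
Proof.
move=> Hi; rewrite /Umap; case: pickP => [m' Hm' | Hnone] /=.
  by apply/(Pu_pick _ _ Hi).
have [m' [A B]] := window_exists m (p := i.-1) (q := i.+1) ltac:(lia).
suff : Pu i m m' by move/(Pu_pick _ _ Hi); rewrite Hnone.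
split.
- by move=> k Hk Hki; apply: A => //; lia.
- by have := B i.-1 ltac:(lia) ltac:(lia); rewrite prednK //; lia.
Qed.

Lemma Umap_eq i b m' : 0 < i < n -> Pu i b m' -> Umap lam i b = m'.
Proof. by move=> Hi H; apply: (Pu_uniq Hi (Umap_spec b Hi) H). Qed.

Lemma lab_same i b m' k : (forall k, k <= n -> k != i -> cf m' k = cf b k) ->
  k < n -> k != i -> k.+1 != i -> lab m' k = lab b k.
Proof. by move=> H Hk H1 H2; rewrite /lab !H //; lia. Qed.

Lemma split2 (w : seq int) j : j.+1 < size w ->
  w = take j w ++ [:: nth 0%R w j; nth 0%R w j.+1] ++ drop j.+2 w.
Proof.
move=> Hj; rewrite -{1}(cat_take_drop j w); congr (_ ++ _).
by rewrite (drop_nth 0%R) ?(drop_nth 0%R (n := j.+1)) // ltnW.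
Qed.

Lemma perm2 (x y u v : int) : perm_eq [:: x; y] [:: u; v] ->
  (x = u /\ y = v) \/ (x = v /\ y = u).
Proof.
move=> P; have : x \in [:: u; v] by rewrite -(perm_mem P) mem_head.
rewrite !inE => /orP[/eqP Ex|/eqP Ex]; subst x.
- rewrite perm_cons in P; have : y \in [:: v] by rewrite -(perm_mem P) mem_head.
  by rewrite inE => /eqP ->; left.
- have P' : perm_eq [:: v; y] [:: v; u].
    by apply: (perm_trans P); rewrite (perm_catC [:: u] [:: v]).
  rewrite perm_cons in P'; have : y \in [:: u] by rewrite -(perm_mem P') mem_head.
  by rewrite inE => /eqP ->; right.
Qed.

Lemma omega_perm (m1 m2 : mchain n) : perm_eq (omega lam m1) (omega lam m2).
Proof.
have P1 := HEL.2 _ (valP m1); have P2 := HEL.2 _ (valP m2).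
by apply: (perm_trans P1); rewrite perm_sym.
Qed.

Lemma lab_perm i b m' : 0 < i < n -> (forall k, k <= n -> k != i -> cf m' k = cf b k) ->
  (lab m' i.-1 = lab b i.-1 /\ lab m' i = lab b i) \/
  (lab m' i.-1 = lab b i /\ lab m' i = lab b i.-1).
Proof.
move=> Hi H.
have Et : take i.-1 (omega lam m') = take i.-1 (omega lam b).
  apply: (eq_from_nth (x0 := 0%R)); first by rewrite !size_take !size_omega.
  move=> k; rewrite size_take_min size_omega => Hk.
  have Hk' : k < i.-1 by move: Hk; rewrite /minn; case: ifP; lia.
  rewrite !nth_take // !omega_nth; try lia.
  by apply: (lab_same H); lia.
have Ed : drop i.-1.+2 (omega lam m') = drop i.-1.+2 (omega lam b).
  apply: (eq_from_nth (x0 := 0%R)); first by rewrite !size_drop !size_omega.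
  move=> k; rewrite size_drop size_omega => Hk.
  rewrite !nth_drop !omega_nth; try lia.
  by apply: (lab_same H); lia.
have Hs : i.-1.+1 < size (omega lam m') by rewrite size_omega; lia.
have Hs' : i.-1.+1 < size (omega lam b) by rewrite size_omega; lia.
have P := omega_perm m' b.
rewrite [X in perm_eq X _](split2 Hs) [X in perm_eq _ X](split2 Hs') in P.
rewrite Et Ed perm_cat2l perm_cat2r in P.
have := perm2 P; rewrite !omega_nth; try lia.
by rewrite prednK; [exact: id | lia].
Qed.

Lemma Uagree i (m : mchain n) k : 0 < i < n -> k <= n -> k != i -> cf (Umap lam i m) k = cf m k.
Proof. by move=> Hi; have [A _] := Umap_spec m Hi; apply: A. Qed.

Lemma Ulab i (m : mchain n) : 0 < i < n -> (lab (Umap lam i m) i.-1 <= lab (Umap lam i m) i)%R.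
Proof. by move=> Hi; have [_ B] := Umap_spec m Hi. Qed.

Lemma Ulab_perm i (m : mchain n) : 0 < i < n ->
  (lab (Umap lam i m) i.-1 = lab m i.-1 /\ lab (Umap lam i m) i = lab m i) \/
  (lab (Umap lam i m) i.-1 = lab m i /\ lab (Umap lam i m) i = lab m i.-1).
Proof. by move=> Hi; apply: lab_perm => //; move=> k; apply: Uagree. Qed.

Lemma Ulab_same i (m : mchain n) k : 0 < i < n -> k < n -> k != i -> k.+1 != i ->
  lab (Umap lam i m) k = lab m k.
Proof. by move=> Hi; apply: lab_same => k'; apply: Uagree. Qed.

Lemma U_idem i (m : mchain n) : 0 < i < n -> Umap lam i (Umap lam i m) = Umap lam i m.
Proof. by move=> Hi; apply: Umap_eq => //; split => //; apply: Ulab. Qed.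

Lemma U_comm i j (m : mchain n) : 0 < i < n -> 0 < j < n -> (i + 2 <= j) || (j + 2 <= i) ->
  Umap lam i (Umap lam j m) = Umap lam j (Umap lam i m).
Proof.
move=> Hi Hj Hij; apply: Umap_eq => //; split.
- move=> k Hk Hki; case: (eqVneq k j) => [->|Hkj].
  + apply: (window_unique (p := j.-1) (q := j.+1)); try lia.
    * by rewrite !Uagree //; lia.
    * by rewrite !Uagree //; lia.
    * move=> k' H1 H2; have -> : k' = j.-1 by lia.
      by rewrite prednK; [apply: Ulab | lia].
    * move=> k' H1 H2; have -> : k' = j.-1 by lia.
      by rewrite prednK; [apply: Ulab | lia].
  + by rewrite !Uagree.
- rewrite !(Ulab_same (i := j)); try lia.
  exact: Ulab.
Qed.

Lemma U_braid i (m : mchain n) : 0 < i -> i.+1 < n ->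
  Umap lam i (Umap lam i.+1 (Umap lam i m)) = Umap lam i.+1 (Umap lam i (Umap lam i.+1 m)).
Proof.
move=> Hi0 Hin.
have Hi : 0 < i < n by lia.
have Hi1 : 0 < i.+1 < n by lia.
set m1 := Umap lam i m; set m2 := Umap lam i.+1 m1; set m3 := Umap lam i m2.
set r1 := Umap lam i.+1 m; set r2 := Umap lam i r1; set r3 := Umap lam i.+1 r2.
have L1 := Ulab_perm m Hi; have L2 := Ulab_perm m1 Hi1; have L3 := Ulab_perm m2 Hi.
have R1 := Ulab_perm m Hi1; have R2 := Ulab_perm r1 Hi; have R3 := Ulab_perm r2 Hi1.
rewrite -/m1 -/m2 -/m3 -/r1 -/r2 -/r3 /= in L1 L2 L3 R1 R2 R3.
have I1 := Ulab m Hi; have I2 := Ulab m1 Hi1; have I3 := Ulab m2 Hi.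
have J1 := Ulab m Hi1; have J2 := Ulab r1 Hi; have J3 := Ulab r2 Hi1.
rewrite -/m1 -/m2 -/m3 -/r1 -/r2 -/r3 /= in I1 I2 I3 J1 J2 J3.
have E1 : lab m1 i.+1 = lab m i.+1 by apply: Ulab_same; lia.
have E2 : lab m2 i.-1 = lab m1 i.-1 by apply: Ulab_same; lia.
have E3 : lab m3 i.+1 = lab m2 i.+1 by apply: Ulab_same; lia.
have F1 : lab r1 i.-1 = lab m i.-1 by apply: Ulab_same; lia.
have F2 : lab r2 i.+1 = lab r1 i.+1 by apply: Ulab_same; lia.
have F3 : lab r3 i.-1 = lab r2 i.-1 by apply: Ulab_same; lia.
have Hm3 : (lab m3 i <= lab m3 i.+1)%R.
  by case: L1 => [[]|[]]; case: L2 => [[]|[]]; case: L3 => [[]|[]]; lia.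
have Hr3 : (lab r3 i.-1 <= lab r3 i)%R.
  by case: R1 => [[]|[]]; case: R2 => [[]|[]]; case: R3 => [[]|[]]; lia.
have Am : forall k, k <= n -> k != i -> k != i.+1 -> cf m3 k = cf m k.
  by move=> k Hk H1 H2; rewrite !Uagree.
have Ar : forall k, k <= n -> k != i -> k != i.+1 -> cf r3 k = cf m k.
  by move=> k Hk H1 H2; rewrite !Uagree.
apply: chain_eq => k Hk.
case: (ltnP k i.-1) => A; first by rewrite Am ?Ar //; lia.
case: (ltnP i.+2 k) => B; first by rewrite Am ?Ar //; lia.
apply: (window_unique (p := i.-1) (q := i.+2)); try lia.
- by rewrite Am ?Ar //; lia.
- by rewrite Am ?Ar //; lia.
- move=> k' H1 H2; have : (k' = i.-1) \/ (k' = i) by lia.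
  by case=> ->; rewrite ?prednK //; lia.
- move=> k' H1 H2; have : (k' = i.-1) \/ (k' = i) by lia.
  by case=> ->; rewrite ?prednK //; lia.
Qed.

Lemma U_moreover i (m : mchain n) : 0 < i < n -> Umap lam i m != m ->
  omega lam (Umap lam i m) = word_mul_s (omega lam m) i /\
  (inversions (word_mul_s (omega lam m) i)).+1 = inversions (omega lam m).
Proof.
move=> Hi Hne.
have Hi0 : 0 < i by lia.
have Hd : (lab m i < lab m i.-1)%R.
  rewrite ltNge; apply/negP => H; move/eqP: Hne; apply; apply: Umap_eq => //; split => //.
have Hsw : forall j, j < n -> nth 0%R (word_mul_s (omega lam m) i) j = nth 0%R (omega lam m) (sig i j).
  move=> j Hj; rewrite /word_mul_s (nth_map 0) ?size_iota ?size_omega // nth_iota //.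
have Hsz : size (word_mul_s (omega lam m) i) = n by rewrite /word_mul_s size_map size_iota size_omega.
split.
- apply: (eq_from_nth (x0 := 0%R)); first by rewrite Hsz size_omega.
  move=> j; rewrite size_omega => Hj.
  have Hsj : sig i j < n by have := sig_cases j Hi0; lia.
  rewrite Hsw // !omega_nth //.
  case: (Ulab_perm m Hi) => [[A B]|[A B]].
    by have := Ulab m Hi; rewrite A B; lia.
  have [[Ej Sj]|[[Ej Sj]|[Nj1 [Nj2 Sj]]]] := sig_cases j Hi0; rewrite Sj.
  + by rewrite Ej.
  + by rewrite Ej.
  + by apply: Ulab_same; lia.
- apply: (inv_swap (i := i)); rewrite ?Hsz ?size_omega //.
  all: try (by move=> j Hj; rewrite Hsw).
  by rewrite !omega_nth //; lia.
Qed.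

End Main.

Section Hecke.
Variables (d : Order.disp_t) (T : finTBPOrderType d) (n : nat) (lam : T -> T -> int) (F : fieldType).
Local Notation M := (@mchain d T n).

Definition LinOf (h : M -> M) (f : {ffun M -> F}) : {ffun M -> F} :=
  [ffun m' => (\sum_(m : M | h m == m') f m)%R].

Lemma TactE i f : Tact lam i f = (- LinOf (Umap lam i) f)%R.
Proof. by []. Qed.

Lemma LinOf_comp h1 h2 f : LinOf h1 (LinOf h2 f) = LinOf (h1 \o h2) f.
Proof.
apply/ffunP => m'; rewrite !ffunE.
rewrite [RHS](partition_big h2 (fun m => h1 m == m')) /=; last by [].
apply: eq_bigr => m Hm; rewrite ffunE; apply: eq_bigl => m0.
by case: eqP => [E|]; [rewrite /= E Hm | rewrite andbF].
Qed.

Lemma LinOf_ext h1 h2 f : (forall m, h1 m = h2 m) -> LinOf h1 f = LinOf h2 f.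
Proof. by move=> H; apply/ffunP => m'; rewrite !ffunE; apply: eq_bigl => m; rewrite H. Qed.

Lemma LinOf_opp h f : LinOf h (- f)%R = (- LinOf h f)%R.
Proof. by apply/ffunP => m'; rewrite !ffunE -sumrN; apply: eq_bigr => m _; rewrite ffunE. Qed.

Lemma Tact_LinOf i h f : Tact lam i (LinOf h f) = (- LinOf (Umap lam i \o h) f)%R.
Proof. by rewrite TactE LinOf_comp. Qed.

Lemma Tact_opp i (f : {ffun M -> F}) : Tact lam i (- f)%R = (- Tact lam i f)%R.
Proof. by rewrite !TactE LinOf_opp. Qed.

End Hecke.

Theorem mainTheorem2 (d : Order.disp_t) (T : finTBPOrderType d) (n : nat)
    (lam : T -> T -> int)
    (Hgraded : graded_rank (T := T) n) (HEL : Sn_EL_labeling n lam) :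
  [/\ (* U_i^2 = U_i *)
      (forall i, 0 < i < n -> forall m : mchain n,
         Umap lam i (Umap lam i m) = Umap lam i m),
      (* U_i U_j = U_j U_i for |i - j| >= 2 *)
      (forall i j, 0 < i < n -> 0 < j < n -> (i + 2 <= j) || (j + 2 <= i) ->
         forall m : mchain n, Umap lam i (Umap lam j m) = Umap lam j (Umap lam i m)),
      (* braid relation, i = 1, ..., n-2 *)
      (forall i, 0 < i -> i.+1 < n -> forall m : mchain n,
         Umap lam i (Umap lam i.+1 (Umap lam i m))
         = Umap lam i.+1 (Umap lam i (Umap lam i.+1 m))),
      (* T_i := -U_i (extended linearly) satisfy the defining relations of H_n(0) *)
      (forall F : fieldType,
        [/\ (forall i, 0 < i < n -> forall f : {ffun mchain n -> F},
               Tact lam i (Tact lam i f) = (- Tact lam i f)%R),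
            (forall i j, 0 < i < n -> 0 < j < n -> (i + 2 <= j) || (j + 2 <= i) ->
               forall f : {ffun mchain n -> F},
                 Tact lam i (Tact lam j f) = Tact lam j (Tact lam i f)) &
            (forall i, 0 < i -> i.+1 < n -> forall f : {ffun mchain n -> F},
               Tact lam i (Tact lam i.+1 (Tact lam i f))
               = Tact lam i.+1 (Tact lam i (Tact lam i.+1 f)))]) &
      (* label permutation of U_i(m) is omega_m s_i, with one fewer inversion *)
      (forall i, 0 < i < n -> forall m : mchain n, Umap lam i m != m ->
         omega lam (Umap lam i m) = word_mul_s (omega lam m) i /\
         (inversions (word_mul_s (omega lam m) i)).+1 = inversions (omega lam m))].
Proof.
split.
- by move=> i Hi m; apply: U_idem.
- by move=> i j Hi Hj Hij m; apply: U_comm.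
- by move=> i Hi Hin m; apply: U_braid.
- move=> F; split.
  + move=> i Hi f; rewrite [Tact lam i f]TactE Tact_opp Tact_LinOf.
    by congr (- - _)%R; apply: LinOf_ext => m /=; apply: U_idem.
  + move=> i j Hi Hj Hij f.
    rewrite [Tact lam j f]TactE [Tact lam i f]TactE !Tact_opp !Tact_LinOf.
    by congr (- - _)%R; apply: LinOf_ext => m /=; apply: U_comm.
  + move=> i Hi Hin f.
    rewrite [Tact lam i f]TactE [Tact lam i.+1 f]TactE; do 3! rewrite ?Tact_opp ?Tact_LinOf.
    rewrite !LinOf_comp.
    by congr (- - - _)%R; apply: LinOf_ext => m /=; apply: U_braid.
- by move=> i Hi m Hne; apply: U_moreover.
Qed.
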